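(* Suppose Assumptions 1 and 2 hold, $U$ is concave, and $U'(0)$ exists. Let $U'_-$ denote the left derivative of $U$ (for $\lambda>0$; at $\lambda=0$ use $U'(0)$), and set $\epsilon_n(t,\lambda)=U'_-(\lambda)e^{-\alpha t}\frac{\bar c}{\alpha}(1-\epsilon+\epsilon e^{-\alpha\delta})^n$. Then for all $n\ge0$ and all $(t,i,\lambda)$, $$V_n(t,i,\lambda)\le V_\infty(t,i,\lambda)\le V_n(t,i,\lambda)+\epsilon_n(t,\lambda),$$ and also $0\le (T^n\bar v)(t,i,\lambda)-(T^nU)(t,i,\lambda)\le\epsilon_n(t,\lambda)$, where $\bar v(t,\lambda)=U(e^{-\alpha t}\bar c/\alpha+\lambda)$.
   Context: Semi-Markov decision model with countable $E$, admissible action sets $A(i)$, semi-Markov kernel $Q(\cdot,\cdot\mid i,a)$ (joint law of sojourn time and next state, $Q(0,j\mid i,a)=0$), measurable cost $C:K\to[0,\bar c]$ with $0<\bar c<\infty$, discount $\alpha>0$, utility $U:[0,\infty)\to\mathbb R$ continuous, strictly increasing. Augmented chain $(T_n,X_n,C_n)$ from $(t,i,\lambda)$: $(T_{k+1}-T_k,X_{k+1})\sim Q(\cdot,\cdot\mid X_k,A_k)$ given the past, $C_n=\lambda+\sum_{k<n}\frac{C(X_k,A_k)}{\alpha}(e^{-\alpha T_k}-e^{-\alpha T_{k+1}})$, $C_\infty=\lim C_n$. $V_n=\inf_\pi\mathbb E^\pi_{(t,i,\lambda)}[U(C_n)]$, $V_\infty=\inf_\pi\mathbb E^\pi_{(t,i,\lambda)}[U(C_\infty)]$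 (infima over all history-dependent policies). $T$ is the operator $Tv(t,i,\lambda)=\inf_{a\in A(i)}\sum_j\int v(t+s,j,\lambda+\frac{C(i,a)}{\alpha}(e^{-\alpha t}-e^{-\alpha(t+s)}))Q(ds,j\mid i,a)$, applied to $U$ viewed as $(t,i,\lambda)\mapsto U(\lambda)$ and to $\bar v$. Assumption 1: there exist $\delta,\epsilon>0$ with $\sup_{(i,a)}Q(\delta,E\mid i,a)\le1-\epsilon$. Assumption 2: $A(i)$ compact; $a\mapsto C(i,a)$ continuous; for each measurable $v$ with $U(\lambda)\le v(t,i,\lambda)\le U(e^{-\alpha t}\bar c/\alpha+\lambda)$ the map $a\mapsto\sum_j\int v(t+s,j,\lambda+\frac{C(i,a)}{\alpha}(e^{-\alpha t}-e^{-\alpha(t+s)}))Q(ds,j\mid i,a)$ is continuous on $A(i)$. *)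

(* Defs.v *)
From HB Require Import structures.
From mathcomp Require Import all_boot all_order all_algebra.
From mathcomp Require Import all_classical all_reals all_analysis measurable_realfun.
Set Implicit Arguments. Unset Strict Implicit. Unset Printing Implicit Defensive.
Import Order.TTheory GRing.Theory Num.Theory.
Import numFieldNormedType.Exports.
Local Open Scope classical_set_scope.
Local Open Scope ring_scope.

Definition discr (T : Type) : Type := T.
HB.instance Definition _ (T : pointedType) := Pointed.on (discr T).
HB.instance Definition _ (T : pointedType) :=
  @isMeasurable.Build default_measure_display (discr T)
    discrete_measurable discrete_measurable0
    (@discrete_measurableC T) (@discrete_measurableU T).

Definition borelT (T : ptopologicalType) := g_sigma_algebraType (@open T).


(* Augmented state (t, i, lambda), encoded as ((t, i), lambda). *)
Definition St (R : realType) (E : pointedType) := ((R * discr E) * R)%type.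

(* History at decision epoch k: ((x_0,a_0), ..., (x_{k-1},a_{k-1})) and x_k. *)
Definition hist (R : realType) (E : pointedType) (Act : ptopologicalType)
  (k : nat) := (k.-tuple (St R E * borelT Act) * St R E)%type.

Definition hist_ext (R : realType) (E : pointedType) (Act : ptopologicalType)
  k (h : hist R E Act k) (a : Act) (y : St R E) : hist R E Act k.+1 :=
  ([tuple of rcons h.1 (h.2, a)], y).

Definition policy (R : realType) (E : pointedType) (Act : ptopologicalType) :=
  forall k, hist R E Act k -> borelT Act.

Definition admissible_policy (R : realType) (E : pointedType)
  (Act : ptopologicalType) (A : E -> set Act) (f : policy R E Act) : Prop :=
  forall k, measurable_fun setT (f k) /\
            forall h : hist R E Act k, A h.2.1.2 (f k h).

Section model.
Variables (R : realType) (E : pointedType) (Act : ptopologicalType).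
Variables (A : E -> set Act)
  (Q : E -> Act -> {measure set (R * discr E)%type -> \bar R})
  (C : E -> Act -> R) (alpha : R) (U : R -> R).

Local Open Scope ereal_scope.

(* cost accumulated during a sojourn of length s started at time t *)
Definition cost_incr (i : E) (a : Act) (t s : R) : R :=
  (C i a / alpha * (expR (- alpha * t) - expR (- alpha * (t + s))))%R.

(* exp_val f N k h = E^f[ U(C_{k+N}) | h_k = h ]  (backward recursion) *)
Fixpoint exp_val (f : policy R E Act) (N : nat) :
    forall k, hist R E Act k -> \bar R :=
  match N with
  | 0 => fun k h => (U h.2.2)%:E
  | N.+1 => fun k h =>
      let t := h.2.1.1 in let i := h.2.1.2 in let l := h.2.2 in
      let a := f k h in
      \int[Q i a]_z exp_val f N
          (hist_ext h a ((t + z.1, z.2), l + cost_incr i a t z.1)%R)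
  end.

Definition init_hist (t : R) (i : E) (l : R) : hist R E Act 0 :=
  ([tuple], ((t, i), l)).

Definition EUCn (f : policy R E Act) (n : nat) (t : R) (i : E) (l : R) :=
  exp_val f n (init_hist t i l).

(* E^pi_{(t,i,lambda)} [U(C_oo)], as the monotone limit of E[U(C_n)] *)
Definition EUCinf (f : policy R E Act) (t : R) (i : E) (l : R) :=
  limn (fun n => EUCn f n t i l).

Definition V_n (n : nat) (t : R) (i : E) (l : R) : \bar R :=
  ereal_inf [set EUCn f n t i l | f in admissible_policy A].

Definition V_inf (t : R) (i : E) (l : R) : \bar R :=
  ereal_inf [set EUCinf f t i l | f in admissible_policy A].

Definition Top (v : R -> E -> R -> \bar R) : R -> E -> R -> \bar R :=
  fun t i l => ereal_inf [set \int[Q i a]_z v (t + z.1)%R z.2 (l + cost_incr i a t z.1)%R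
                          | a in A i].

End model.

Definition right_deriv0 (R : realType) (U : R -> R) : R :=
  lim ((fun h : R => (U h - U 0) / h) @ 0^'+).

Definition left_deriv (R : realType) (U : R -> R) (l : R) : R :=
  lim ((fun h : R => (U l - U (l - h)) / h) @ 0^'+).

Definition Uprime_minus (R : realType) (U : R -> R) (l : R) : R :=
  if 0 < l then left_deriv U l else right_deriv0 U.

Definition concave_on_nonneg (R : realType) (U : R -> R) : Prop :=
  forall x y th : R, 0 <= x -> 0 <= y -> 0 <= th <= 1 ->
    th * U x + (1 - th) * U y <= U (th * x + (1 - th) * y).

(* Main.v *)
Require Import Defs.
From HB Require Import structures.
From mathcomp Require Import all_boot all_order all_algebra.
From mathcomp Require Import all_classical all_reals all_analysis measurable_realfun.
From mathcomp Require Import ring lra.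
Import Order.TTheory GRing.Theory Num.Theory.
Import numFieldNormedType.Exports.
Local Open Scope classical_set_scope.
Local Open Scope ring_scope.

Section Concave.
Variables (R : realType) (U : R -> R).
Hypothesis hUconc : concave_on_nonneg U.

Lemma chord_key a b c : 0 <= a -> a < b -> b < c ->
  (c - b) * U a + (b - a) * U c <= U b * (c - a).
Proof.
move=> a0 ab bc.
have ca : 0 < c - a by lra.
have := hUconc a c ((c-b)/(c-a)).
have c0 : 0 <= c by lra.
have th01 : 0 <= (c-b)/(c-a) <= 1.
  apply/andP; split; first by apply: divr_ge0; lra.
  by rewrite ler_pdivrMr //; lra.
move=> /(_ a0 c0 th01).
have -> : (c - b) / (c - a) * a + (1 - (c - b) / (c - a)) * c = b.
  by field; lra.
move=> H.
rewrite -(ler_pM2r ca) in H.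
suff <- : ((c - b) / (c - a) * U a + (1 - (c - b) / (c - a)) * U c) * (c - a) =
  (c - b) * U a + (b - a) * U c by [].
by field; lra.
Qed.

Lemma chord1 a b c : 0 <= a -> a < b -> b < c ->
  (U c - U a) / (c - a) <= (U b - U a) / (b - a).
Proof.
move=> a0 ab bc; have H := @chord_key a b c a0 ab bc.
rewrite ler_pdivrMr; last lra.
rewrite mulrAC ler_pdivlMr; last lra.
nra.
Qed.

Lemma chord2 a b c : 0 <= a -> a < b -> b < c ->
  (U c - U b) / (c - b) <= (U c - U a) / (c - a).
Proof.
move=> a0 ab bc; have H := @chord_key a b c a0 ab bc.
rewrite ler_pdivrMr; last lra.
rewrite mulrAC ler_pdivlMr; last lra.
nra.
Qed.

Lemma sl_mono a b c : 0 <= a -> a < b -> b < c ->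
  (U c - U b) / (c - b) <= (U b - U a) / (b - a).
Proof.
by move=> a0 ab bc; apply: le_trans (@chord2 a b c a0 ab bc) (@chord1 a b c a0 ab bc).
Qed.

Hypothesis hUi : {in `[0, +oo[ &, {mono U : x y / x < y}}.
Hypothesis hU0 : cvg ((fun h : R => (U h - U 0) / h) @ 0^'+).

Lemma ld_cvg l : 0 < l -> cvg ((fun h : R => (U l - U (l - h)) / h) @ 0^'+).
Proof.
move=> l0.
have Hl : \forall x \near 0^'+, x < l by exact: nbhs_right_lt.
apply: nondecreasing_at_right_is_cvgr.
- apply: filterS Hl => x xl y z; rewrite !in_itv /= => /andP[y0 yx] /andP[z0 zx] yz.
  have [->|yz'] := eqVneq y z; first by [].
  have yz2 : y < z by rewrite lt_neqAle yz'.
  have := @chord2 (l - z) (l - y) l.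
  have -> : l - (l - y) = y by ring.
  have -> : l - (l - z) = z by ring.
  by apply; lra.
- apply: filterS Hl => x xl.
  exists ((U (l + 1) - U l) / (l + 1 - l)) => _ [y yin <-].
  move: yin; rewrite /= in_itv /= => /andP[y0 yx].
  have := @sl_mono (l - y) l (l + 1).
  have -> : l - (l - y) = y by ring.
  by apply; lra.
Qed.

Definition Upm := Uprime_minus U.

Lemma Upm_ge l d : 0 <= l -> 0 < d -> (U (l + d) - U l) / d <= Upm l.
Proof.
move=> l0 d0; rewrite /Upm /Uprime_minus.
have [lp|lp] := ltP 0 l.
- apply: limr_ge; first exact: ld_cvg.
  near=> h.
  have h0 : 0 < h by near: h; exact: nbhs_right_gt.
  have hl : h < l by near: h; exact: nbhs_right_lt.
  have := @sl_mono (l - h) l (l + d).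
  have -> : l - (l - h) = h by ring.
  have -> : l + d - l = d by ring.
  by apply; lra.
- have l00 : l = 0 by lra.
  rewrite l00 add0r; apply: limr_ge; first exact: hU0.
  near=> h.
  have h0 : 0 < h by near: h; exact: nbhs_right_gt.
  have hl : h < d by near: h; exact: nbhs_right_lt.
  have := @chord1 0 h d.
  rewrite !subr0.
  by apply; lra.
Unshelve. all: by end_near.
Qed.

Lemma Upm_le x y : 0 <= x -> x < y -> Upm y <= (U y - U x) / (y - x).
Proof.
move=> x0 xy; rewrite /Upm /Uprime_minus.
have yp : 0 < y by lra.
rewrite yp; apply: limr_le; first exact: ld_cvg.
near=> h.
have h0 : 0 < h by near: h; exact: nbhs_right_gt.
have hl : h < y - x by near: h; apply: nbhs_right_lt; lra.
have := @chord2 x (y - h) y.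
have -> : y - (y - h) = h by ring.
by apply; lra.
Unshelve. all: by end_near.
Qed.

Lemma Upm_anti x y : 0 <= x -> x <= y -> Upm y <= Upm x.
Proof.
move=> x0 xy; have [->|xy'] := eqVneq x y; first by [].
have xy2 : x < y by rewrite lt_neqAle xy' xy.
apply: le_trans (@Upm_le x y x0 xy2) _.
have := @Upm_ge x (y - x) x0.
have -> : x + (y - x) = y by ring.
by apply; lra.
Qed.

Lemma Upm_bound l d : 0 <= l -> 0 <= d -> U (l + d) <= U l + Upm l * d.
Proof.
move=> l0 d0; have [->|dn] := eqVneq d 0; first by rewrite addr0 mulr0 addr0.
have dp : 0 < d by rewrite lt_neqAle eq_sym dn d0.
have := @Upm_ge l d l0 dp.
rewrite ler_pdivrMr // => H; lra.
Qed.

Lemma Upm_ge0 l : 0 <= l -> 0 <= Upm l.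
Proof.
move=> l0; have H1 := @Upm_ge l 1 l0 ltr01.
have H2 : U l < U (l + 1).
  by rewrite hUi ?in_itv /= ?andbT; lra.
apply: le_trans _ H1.
rewrite divr1 subr_ge0; exact: ltW.
Qed.

Lemma U_mono x y : 0 <= x -> x <= y -> U x <= U y.
Proof.
move=> x0 xy; have [->|xy'] := eqVneq x y; first by [].
have xy2 : x < y by rewrite lt_neqAle xy' xy.
apply: ltW; rewrite hUi ?in_itv /= ?andbT //; lra.
Qed.
End Concave.

Section Inner.
Local Open Scope ereal_scope.
Context d (T : measurableType d) (R : realType) (mu : {measure set T -> \bar R}).
Import HBNNSimple.

Lemma inner_mono (X Y : T -> \bar R) : (forall x, 0 <= X x) -> (forall x, 0 <= Y x) ->
  (forall x, X x <= Y x) -> \int[mu]_x X x <= \int[mu]_x Y x.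
Proof.
move=> X0 Y0 XY; rewrite (ge0_integralTE _ X0) (ge0_integralTE _ Y0).
apply: ereal_sup_le => _ [h hX <-]; exists h => //= x.
exact: le_trans (hX x) (XY x).
Qed.

Lemma inner_ub (X : T -> \bar R) (c : \bar R) : (forall x, 0 <= X x) ->
  (forall h : {nnsfun T >-> R}, (forall x, (h x)%:E <= X x) -> sintegral mu h <= c) ->
  \int[mu]_x X x <= c.
Proof.
move=> X0 H; rewrite (ge0_integralTE _ X0).
by apply: ge_ereal_sup => _ [h hX <-]; exact: H.
Qed.

Hypothesis mu1 : mu setT = 1.

Lemma inner_ae_le (X : T -> \bar R) (N : set T) (c : R) : measurable N -> mu N = 0 ->
  (forall x, 0 <= X x) -> (forall x, ~ N x -> X x <= c%:E) -> (0 <= c)%R ->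
  \int[mu]_x X x <= c%:E.
Proof.
move=> mN muN X0 Xc c0; apply: inner_ub => // h hX.
rewrite -integralT_nnsfun.
have -> : c%:E = \int[mu]_x (cst c%:E x).
  by rewrite integral_cst // mu1 mule1.
apply: ae_ge0_le_integral => //.
- by move=> x _; rewrite lee_fin.
- by apply/measurable_EFinP.
- exists N; split => //= x /= nP.
  have [//|Nx] := pselect (N x); exfalso; apply: nP => _.
  exact: le_trans (hX x) (Xc x Nx).
Qed.

Lemma pos_le_maxe (a : R) (y : \bar R) : (0 < a)%R -> a%:E <= maxe y 0 -> a%:E <= y.
Proof.
move=> a0; rewrite le_max => /orP[//|]; rewrite lee_fin => a0'.
by exfalso; move: a0'; rewrite leNgt a0.
Qed.

Lemma ML (F G : T -> \bar R) (D : T -> R) (N : set T) (mF MF mG MG : R) :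
  measurable N -> mu N = 0 -> measurable_fun setT D -> (forall x, 0 <= D x)%R ->
  (forall x, ~ N x -> F x <= G x + (D x)%:E) ->
  (forall x, ~ N x -> mF%:E <= F x <= MF%:E) ->
  (forall x, ~ N x -> mG%:E <= G x <= MG%:E) ->
  \int[mu]_x (D x)%:E \is a fin_num ->
  \int[mu]_x F x <= \int[mu]_x G x + \int[mu]_x (D x)%:E.
Proof.
move=> mN muN mD D0 FG Fb Gb Dfin.
have K : forall phi psi : {nnsfun T >-> R},
    (forall x, (phi x)%:E <= F^\+ x) -> (forall x, (psi x)%:E <= G^\- x) ->
    sintegral mu phi + sintegral mu psi <=
      \int[mu]_x G^\+ x + \int[mu]_x F^\- x + \int[mu]_x (D x)%:E.
  move=> phi psi hphi hpsi.
  pose S1 := phi @^-1` [set 0%R] `&` ~` N.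
  pose S2 := psi @^-1` [set 0%R] `&` ~` N.
  have mS1 : measurable S1.
    by apply: measurableI; [exact: measurable_funPTI (measurable_set1 _)|exact: measurableC].
  have mS2 : measurable S2.
    by apply: measurableI; [exact: measurable_funPTI (measurable_set1 _)|exact: measurableC].
  pose chi := ((phi \- D)^\+ \* \1_S2)%R.
  pose xi := ((psi \- D)^\+ \* \1_S1)%R.
  have mchi : measurable_fun setT chi.
    apply: measurable_funM; last exact: measurable_indic.
    by apply: measurable_funrpos; apply: measurable_funB.
  have mxi : measurable_fun setT xi.
    apply: measurable_funM; last exact: measurable_indic.
    by apply: measurable_funrpos; apply: measurable_funB.
  have chi0 x : (0 <= chi x)%R.
    by rewrite /chi /= mulr_ge0 // ?indicE ?ler0n // /funrpos le_max lexx orbT.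
  have xi0 x : (0 <= xi x)%R.
    by rewrite /xi /= mulr_ge0 // ?indicE ?ler0n // /funrpos le_max lexx orbT.
  have hchi x : (chi x)%:E <= G^\+ x.
    rewrite /chi /= indicE.
    have [xS2|xS2] := boolP (x \in S2); last by rewrite mulr0 funepos_ge0.
    rewrite mulr1; move: xS2; rewrite in_setE /S2 /= => -[psi0 nN].
    rewrite /funrpos /Num.max; case: ifPn => [_|]; first by rewrite funepos_ge0.
    rewrite -leNgt /= => hge /=.
    have [hle|hlt] := leP (phi x - D x)%R 0%R.
      have -> : (phi x - D x = 0)%R by lra.
      exact: funepos_ge0.
    have phi0 : (0 < phi x)%R by have := D0 x; lra.
    have h1 : (phi x)%:E <= F x by apply: pos_le_maxe => //; rewrite -funeposE.
    rewrite funeposE le_max; apply/orP; left.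
    rewrite EFinB leeBlDr //; exact: le_trans h1 (FG x nN).
  have hxi x : (xi x)%:E <= F^\- x.
    rewrite /xi /= indicE.
    have [xS1|xS1] := boolP (x \in S1); last by rewrite mulr0 funeneg_ge0.
    rewrite mulr1; move: xS1; rewrite in_setE /S1 /= => -[phi0 nN].
    rewrite /funrpos /Num.max; case: ifPn => [_|]; first by rewrite funeneg_ge0.
    rewrite -leNgt /= => hge /=.
    have [hle|hlt] := leP (psi x - D x)%R 0%R.
      have -> : (psi x - D x = 0)%R by lra.
      exact: funeneg_ge0.
    have psi0 : (0 < psi x)%R by have := D0 x; lra.
    have h1 : (psi x)%:E <= - G x by apply: pos_le_maxe => //; rewrite -funenegE.
    rewrite funenegE le_max; apply/orP; left.
    rewrite leeNr; apply: le_trans (FG x nN) _.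
    rewrite leeNr in h1.
    have -> : - (psi x - D x)%:E = (- psi x)%:E + (D x)%:E by rewrite -EFinD; congr EFin; ring.
    exact: leeD2r.
  have hsum x : ~ N x -> (phi x + psi x <= chi x + xi x + D x)%R.
    move=> nN.
    have := chi0 x; have := xi0 x; have := D0 x.
    have p0' : (0 <= phi x)%R by exact: fun_ge0.
    have q0' : (0 <= psi x)%R by exact: fun_ge0.
    have [p0|p0] := eqVneq (phi x) 0%R; have [q0|q0] := eqVneq (psi x) 0%R.
    - by rewrite p0 q0; lra.
    - have : (psi x - D x <= xi x)%R.
        rewrite /xi /= indicE mem_set; last by split.
        by rewrite mulr1 /funrpos le_max lexx.
      by rewrite p0; lra.
    - have : (phi x - D x <= chi x)%R.
        rewrite /chi /= indicE mem_set; last by split.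
        by rewrite mulr1 /funrpos le_max lexx.
      by rewrite q0; lra.
    - have phip : (0 < phi x)%R by rewrite lt_neqAle eq_sym p0.
      have psip : (0 < psi x)%R by rewrite lt_neqAle eq_sym q0.
      have h1 : (phi x)%:E <= F x by apply: pos_le_maxe => //; rewrite -funeposE.
      have h2 : (psi x)%:E <= - G x by apply: pos_le_maxe => //; rewrite -funenegE.
      rewrite leeNr in h2.
      have h3 : (phi x)%:E <= (- psi x)%:E + (D x)%:E.
        by apply: le_trans h1 (le_trans (FG x nN) (leeD2r _ h2)).
      move: h3; rewrite -EFinD lee_fin; lra.
  rewrite -!integralT_nnsfun.
  have mphi : measurable_fun setT (fun x => (phi x)%:E) by apply/measurable_EFinP.
  have mpsi : measurable_fun setT (fun x => (psi x)%:E) by apply/measurable_EFinP.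
  have mchiE : measurable_fun setT (fun x => (chi x)%:E) by apply/measurable_EFinP.
  have mxiE : measurable_fun setT (fun x => (xi x)%:E) by apply/measurable_EFinP.
  have mDE : measurable_fun setT (fun x => (D x)%:E) by apply/measurable_EFinP.
  have f10 : forall x, [set: T] x -> 0 <= (phi x)%:E by move=> x _; rewrite lee_fin fun_ge0.
  have f20 : forall x, [set: T] x -> 0 <= (psi x)%:E by move=> x _; rewrite lee_fin fun_ge0.
  rewrite -(ge0_integralD mu measurableT f10 mphi f20 mpsi).
  apply: (@le_trans _ _ (\int[mu]_x ((chi x)%:E + (xi x)%:E + (D x)%:E))).
    apply: ae_ge0_le_integral => //.
    - by move=> x _; rewrite adde_ge0 // lee_fin fun_ge0.
    - exact: emeasurable_funD.
    - by move=> x _; rewrite !adde_ge0 // lee_fin.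
    - by apply: emeasurable_funD => //; exact: emeasurable_funD.
    - exists N; split => //= x /= nP.
      have [//|Nx] := pselect (N x); exfalso; apply: nP => _.
      by rewrite -!EFinD lee_fin; exact: hsum.
  have g10 : forall x, [set: T] x -> 0 <= (chi x)%:E + (xi x)%:E.
    by move=> x _; rewrite adde_ge0 // lee_fin.
  have g20 : forall x, [set: T] x -> 0 <= (D x)%:E by move=> x _; rewrite lee_fin.
  have h10 : forall x, [set: T] x -> 0 <= (chi x)%:E by move=> x _; rewrite lee_fin.
  have h20 : forall x, [set: T] x -> 0 <= (xi x)%:E by move=> x _; rewrite lee_fin.
  rewrite (ge0_integralD mu measurableT g10 (emeasurable_funD mchiE mxiE) g20 mDE).
  rewrite (ge0_integralD mu measurableT h10 mchiE h20 mxiE).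
  apply: leeD2r; apply: leeD.
    by apply: inner_mono => x; [rewrite lee_fin|exact: funepos_ge0|exact: hchi].
  by apply: inner_mono => x; [rewrite lee_fin|exact: funeneg_ge0|exact: hxi].
have finb (X : T -> \bar R) (c : R) : (0 <= c)%R -> (forall x, 0 <= X x) ->
    (forall x, ~ N x -> X x <= c%:E) -> \int[mu]_x X x \is a fin_num.
  move=> c0 X0 Xc; rewrite fin_numElt; apply/andP; split.
    by apply: lt_le_trans (ltNyr 0%R) _; exact: integral_ge0.
  by apply: le_lt_trans (ltry c); exact: (@inner_ae_le X N c mN muN X0 Xc c0).
have hmax (a : R) : a%:E <= (Num.max a 0%R)%:E by rewrite lee_fin le_max lexx.
have max0 (a : R) : (0 <= Num.max a 0%R)%R by rewrite le_max lexx orbT.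
have hFp : \int[mu]_x F^\+ x \is a fin_num.
  apply: (finb _ (Num.max MF 0%R)); [exact: max0|exact: funepos_ge0|move=> x nN].
  rewrite funeposE ge_max; apply/andP; split; last by rewrite lee_fin.
  by case/andP: (Fb x nN) => _ h; exact: le_trans h (hmax _).
have hFn : \int[mu]_x F^\- x \is a fin_num.
  apply: (finb _ (Num.max (- mF)%R 0%R)); [exact: max0|exact: funeneg_ge0|move=> x nN].
  rewrite funenegE ge_max; apply/andP; split; last by rewrite lee_fin.
  case/andP: (Fb x nN) => h _; apply: le_trans (hmax _).
  by rewrite EFinN leeN2.
have hGp : \int[mu]_x G^\+ x \is a fin_num.
  apply: (finb _ (Num.max MG 0%R)); [exact: max0|exact: funepos_ge0|move=> x nN].
  rewrite funeposE ge_max; apply/andP; split; last by rewrite lee_fin.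
  by case/andP: (Gb x nN) => _ h; exact: le_trans h (hmax _).
have hGn : \int[mu]_x G^\- x \is a fin_num.
  apply: (finb _ (Num.max (- mG)%R 0%R)); [exact: max0|exact: funeneg_ge0|move=> x nN].
  rewrite funenegE ge_max; apply/andP; split; last by rewrite lee_fin.
  case/andP: (Gb x nN) => h _; apply: le_trans (hmax _).
  by rewrite EFinN leeN2.
have sfin (phi : {nnsfun T >-> R}) : (forall x, (phi x)%:E <= F^\+ x) ->
    sintegral mu phi \is a fin_num.
  move=> hphi; rewrite fin_numElt; apply/andP; split.
    by apply: lt_le_trans (ltNyr 0%R) _; exact: sintegral_ge0.
  move: hFp; rewrite fin_numElt => /andP[_]; apply: le_lt_trans.
  rewrite -integralT_nnsfun; apply: inner_mono => x;
    [by rewrite lee_fin fun_ge0|exact: funepos_ge0|exact: hphi].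
have H : \int[mu]_x F^\+ x + \int[mu]_x G^\- x <=
    \int[mu]_x G^\+ x + \int[mu]_x F^\- x + \int[mu]_x (D x)%:E.
  rewrite -leeBrDr //.
  rewrite [X in X <= _](ge0_integralTE _ (funepos_ge0 F)).
  apply: ge_ereal_sup => _ [phi hphi <-].
  rewrite leeBrDr // -leeBrDl; last exact: sfin.
  rewrite [X in X <= _](ge0_integralTE _ (funeneg_ge0 G)).
  apply: ge_ereal_sup => _ [psi hpsi <-].
  rewrite leeBrDl; last exact: sfin.
  exact: K.
rewrite integralE [X in _ <= X + _]integralE.
move: H.
move: hFp hFn hGp hGn Dfin => /fineK <- /fineK <- /fineK <- /fineK <- /fineK <-.
rewrite -!EFinN -!EFinD !lee_fin; lra.
Qed.
End Inner.
Section Jspec.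
Local Open Scope ereal_scope.
Context d (T : measurableType d) (R : realType) (mu : {measure set T -> \bar R}).
Hypothesis mu1 : mu setT = 1.

Lemma J_bnd N (F : T -> \bar R) (m M : R) : measurable N -> mu N = 0 ->
  (forall x, ~ N x -> m%:E <= F x <= M%:E) -> m%:E <= \int[mu]_x F x <= M%:E.
Proof.
move=> mN muN Fb.
have i0 : \int[mu]_x ((0%R : R)%:E) = 0 by exact: integral0.
have ic (c : R) : \int[mu]_x (cst c%:E x) = c%:E by rewrite integral_cst // mu1 mule1.
have mD0 : measurable_fun setT (fun _ : T => (0%R : R)) by exact: measurable_cst.
apply/andP; split.
- have := @ML d T R mu mu1 (cst m%:E) F (fun _ : T => (0%R : R)) N m m m M mN muN mD0 (fun _ => lexx 0%R).
  rewrite ic i0 adde0; apply => // x nN /=; rewrite ?adde0 ?lexx ?andbT //=;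
  by case/andP: (Fb x nN).
- have := @ML d T R mu mu1 F (cst M%:E) (fun _ : T => (0%R : R)) N m M M M mN muN mD0 (fun _ => lexx 0%R).
  rewrite ic i0 adde0; apply => // x nN /=; rewrite ?adde0 ?lexx ?andbT //=;
  by case/andP: (Fb x nN).
Qed.

Lemma J_step N S (F G : T -> \bar R) (K a b p mF MF mG MG : R) :
  measurable N -> mu N = 0 -> measurable S -> mu S <= p%:E ->
  (0 <= K)%R -> (0 <= a)%R -> (0 <= b)%R ->
  (forall x, ~ N x -> F x <= G x + (K * (a + b * \1_S x))%:E) ->
  (forall x, ~ N x -> mF%:E <= F x <= MF%:E) ->
  (forall x, ~ N x -> mG%:E <= G x <= MG%:E) ->
  \int[mu]_x F x <= \int[mu]_x G x + (K * (a + b * p))%:E.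
Proof.
move=> mN muN mS muS K0 a0 b0 FG Fb Gb.
have mD : measurable_fun setT (fun x => K * (a + b * \1_S x))%R.
  apply: measurable_funM; first exact: measurable_cst.
  apply: measurable_funD; first exact: measurable_cst.
  by apply: measurable_funM; [exact: measurable_cst|exact: measurable_indic].
have D0 x : (0 <= K * (a + b * \1_S x))%R.
  by rewrite mulr_ge0 // addr_ge0 // mulr_ge0 // indicE ler0n.
have mS0 : 0 <= mu S by exact: measure_ge0.
have Dint : \int[mu]_x (K * (a + b * \1_S x))%:E = (K * a)%:E + (K * b)%:E * mu S.
  have -> : (fun x => (K * (a + b * \1_S x))%:E) =
      (fun x => cst (K * a)%:E x + (K * b)%:E * (\1_S x)%:E).
    by apply/funext => x /=; rewrite -EFinM -EFinD mulrDr mulrA.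
  have f10 : forall x, [set: T] x -> 0 <= cst (K * a)%:E x.
    by move=> x _; rewrite lee_fin mulr_ge0.
  have f20 : forall x, [set: T] x -> 0 <= (K * b)%:E * (\1_S x)%:E.
    by move=> x _; rewrite mule_ge0 // lee_fin ?mulr_ge0 // indicE ler0n.
  have mf2 : measurable_fun setT (fun x => (K * b)%:E * (\1_S x)%:E).
    apply: emeasurable_funM; first exact: measurable_cst.
    by apply/measurable_EFinP; exact: measurable_indic.
  rewrite (ge0_integralD mu measurableT f10 (measurable_cst _) f20 mf2).
  rewrite integral_cst // mu1 mule1 ge0_integralZl_EFin //.
  - by rewrite integral_indic // setIT.
  all: try (by move=> x _; rewrite lee_fin indicE ler0n).
  all: try (by apply/measurable_EFinP; exact: measurable_indic).
  all: try exact: mulr_ge0.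
have Dfin : \int[mu]_x (K * (a + b * \1_S x))%:E \is a fin_num.
  rewrite Dint fin_numD fin_numM //; apply/andP; split.
  - by apply: contraTneq mS0 => ->.
  - by apply: contraTneq muS => ->; rewrite leye_eq.
apply: le_trans (@ML d T R mu mu1 F G _ N mF MF mG MG mN muN mD D0 FG Fb Gb Dfin) _.
apply: leeD2l; rewrite Dint.
rewrite mulrDr EFinD leeD2l // mulrA EFinM.
rewrite -EFinM (EFinM (K * b)); apply: lee_pmul => //; by rewrite lee_fin ?mulr_ge0.
Qed.
End Jspec.

Section Model.
Variables (R : realType) (E : pointedType) (Act : ptopologicalType)
  (A : E -> set Act)
  (Q : E -> Act -> {measure set (R * discr E)%type -> \bar R})
  (C : E -> Act -> R) (cbar alpha : R) (U : R -> R) (delta eps : R).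
Hypothesis hA0 : forall i, A i !=set0.
Hypothesis hQ1 : forall i a, A i a -> Q i a setT = 1%E.
Hypothesis hQ0 : forall i a, A i a -> Q i a ([set s : R | s <= 0] `*` setT) = 0%E.
Hypothesis hcbar : 0 < cbar.
Hypothesis hC : forall i a, A i a -> 0 <= C i a <= cbar.
Hypothesis halpha : 0 < alpha.
Hypothesis hUi : {in `[0, +oo[ &, {mono U : x y / x < y}}.
Hypothesis hdelta : 0 < delta.
Hypothesis heps : 0 < eps.
Hypothesis hA1 : forall i a, A i a ->
           (Q i a ([set s : R | (s <= delta)%R] `*` setT) <= (1 - eps)%:E)%E.
Hypothesis hUconc : concave_on_nonneg U.
Hypothesis hU0 : cvg ((fun h : R => (U h - U 0) / h) @ 0^'+).

Let ci := cost_incr C alpha.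
Let g := 1 - eps + eps * expR (- alpha * delta).
Let ed := expR (- alpha * delta).
Let en n t l := Upm R U l * expR (- alpha * t) * (cbar / alpha) * g ^+ n.
Let ub t l := U (expR (- alpha * t) * cbar / alpha + l).
Let NN := [set s : R | s <= 0] `*` [set: discr E].
Let SS := [set s : R | s <= delta] `*` [set: discr E].

Lemma mX (c : R) : measurable ([set s : R | (s <= c)%R] `*` [set: discr E]).
Proof.
apply: measurableX => //.
have -> : [set s : R | (s <= c)%R] = [set` `]-oo, c]] by apply/seteqP; split => x /=; rewrite in_itv.
exact: measurable_itv.
Qed.

Lemma posNN (z : R * discr E) : ~ NN z -> 0 < z.1.
Proof. by move=> nN; rewrite ltNge; apply/negP => h; apply: nN. Qed.

Lemma eps_le1 : eps <= 1.
Proof.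
have [i _] : exists i : E, True by exists point.
have [a Aa] := hA0 i.
have := hA1 i a Aa; have := measure_ge0 (Q i a) ([set s : R | (s <= delta)%R] `*` setT).
move=> h1 h2; have := le_trans h1 h2; rewrite lee_fin; lra.
Qed.

Lemma g_ge0 : 0 <= g.
Proof.
have := eps_le1; have := mulr_gt0 heps (expR_gt0 (- alpha * delta)); rewrite /g; lra.
Qed.

Lemma ed_le1 : ed <= 1.
Proof. rewrite /ed expR_le1 mulNr oppr_le0; exact/ltW/mulr_gt0. Qed.

Lemma cost_ge0 i a t s : A i a -> 0 <= s -> 0 <= ci i a t s.
Proof.
move=> Aa s0; rewrite /ci /cost_incr; apply: mulr_ge0.
  by apply: divr_ge0; [case/andP: (hC i a Aa)|exact: ltW].
rewrite subr_ge0 ler_expR; have := mulr_ge0 (ltW halpha) s0; lra.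
Qed.

Lemma ub_step i a t l s : A i a -> 0 <= s ->
  expR (- alpha * (t + s)) * cbar / alpha + (l + ci i a t s) <=
  expR (- alpha * t) * cbar / alpha + l.
Proof.
move=> Aa s0; rewrite /ci /cost_incr.
have e12 : expR (- alpha * (t + s)) <= expR (- alpha * t) by rewrite ler_expR; have := mulr_ge0 (ltW halpha) s0; lra.
case/andP: (hC i a Aa) => C0 Cc.
have ia : 0 < alpha^-1 by rewrite invr_gt0.
have h1 : 0 <= cbar - C i a by lra.
have h3 : 0 <= expR (- alpha * t) - expR (- alpha * (t + s)) by lra.
have := mulr_ge0 (mulr_ge0 h1 (ltW ia)) h3.
nra.
Qed.

Let K n t l := Upm R U l * expR (- alpha * t) * (cbar / alpha) * g ^+ n.

Lemma K_ge0 n t l : 0 <= l -> 0 <= K n t l.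
Proof.
move=> l0; rewrite /K; apply: mulr_ge0; last exact: exprn_ge0 g_ge0.
apply: mulr_ge0; last by apply: divr_ge0; apply: ltW.
apply: mulr_ge0; last exact/ltW/expR_gt0.
exact: Upm_ge0.
Qed.

Lemma en_step n t l l' (z : R * discr E) : 0 <= t -> 0 <= l -> l <= l' -> 0 < z.1 ->
  en n (t + z.1) l' <= K n t l * (ed + (1 - ed) * \1_SS z).
Proof.
move=> t0 l0 ll' s0.
have es : expR (- alpha * z.1) <= ed + (1 - ed) * \1_SS z.
  rewrite indicE; have [sd|sd] := leP z.1 delta.
    rewrite mem_set /=; last by split.
    rewrite mulr1 addrC subrK expR_le1; have := mulr_gt0 halpha s0; lra.
  rewrite memNset /=; last by case => /=; lra.
  have h : alpha * delta < alpha * z.1 by rewrite ltr_pM2l.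
  rewrite mulr0 addr0 /ed ler_expR; lra.
rewrite /en /K.
have -> : expR (- alpha * (t + z.1)) = expR (- alpha * t) * expR (- alpha * z.1).
  by rewrite -expRD; congr expR; ring.
set w := ed + (1 - ed) * \1_SS z.
set P := expR (- alpha * t) * (cbar / alpha) * g ^+ n.
have P0 : 0 <= P.
  apply: mulr_ge0; last exact: exprn_ge0 g_ge0.
  by apply: mulr_ge0; [exact/ltW/expR_gt0|apply: divr_ge0; apply: ltW].
have -> : Upm R U l' * (expR (- alpha * t) * expR (- alpha * z.1)) * (cbar / alpha) * g ^+ n =
  (Upm R U l' * expR (- alpha * z.1)) * P by rewrite /P; ring.
have -> : Upm R U l * expR (- alpha * t) * (cbar / alpha) * g ^+ n * w =
  (Upm R U l * w) * P by rewrite /P; ring.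
apply: (ler_wpM2r P0).
apply: ler_pM.
- by apply: Upm_ge0 => //; lra.
- exact/ltW/expR_gt0.
- exact: Upm_anti.
- exact: es.
Qed.

Lemma bnd_trans i a t l (z : R * discr E) (x : \bar R) : A i a -> 0 <= t -> 0 <= l ->
  ~ NN z ->
  ((U (l + ci i a t z.1))%:E <= x <= (ub (t + z.1) (l + ci i a t z.1))%:E)%E ->
  ((U l)%:E <= x <= (ub t l)%:E)%E.
Proof.
move=> Aa t0 l0 nN /andP[h1 h2]; have s0 := posNN z nN.
have c0 := cost_ge0 i a t z.1 Aa (ltW s0).
apply/andP; split.
  apply: le_trans h1; rewrite lee_fin; apply: (@U_mono R U hUi) => //; lra.
apply: le_trans h2 _; rewrite lee_fin; apply: (@U_mono R U hUi).
  apply: addr_ge0; last lra.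
  by apply: mulr_ge0; [apply: mulr_ge0; [exact/ltW/expR_gt0|exact: ltW]|rewrite invr_ge0 ltW].
exact: (ub_step i a t l z.1 Aa (ltW s0)).
Qed.

Lemma int_bnd i a t l (F : R * discr E -> \bar R) : A i a ->
  (forall z, ~ NN z -> ((U l)%:E <= F z <= (ub t l)%:E)%E) ->
  ((U l)%:E <= \int[Q i a]_z F z <= (ub t l)%:E)%E.
Proof.
move=> Aa Fb; exact: (@J_bnd _ _ _ (Q i a) (hQ1 i a Aa) NN F (U l) (ub t l) (mX 0) (hQ0 i a Aa) Fb).
Qed.

Lemma int_mono i a t l (F G : R * discr E -> \bar R) : A i a ->
  (forall z, ~ NN z -> ((U l)%:E <= F z <= (ub t l)%:E)%E) ->
  (forall z, ~ NN z -> ((U l)%:E <= G z <= (ub t l)%:E)%E) ->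
  (forall z, ~ NN z -> (F z <= G z)%E) ->
  (\int[Q i a]_z F z <= \int[Q i a]_z G z)%E.
Proof.
move=> Aa Fb Gb FG.
have := @J_step _ _ _ (Q i a) (hQ1 i a Aa) NN SS F G 0 0 0 (1 - eps) (U l) (ub t l) (U l) (ub t l) (mX 0) (hQ0 i a Aa) (mX delta) (hA1 i a Aa) (lexx 0) (lexx 0) (lexx 0) _ Fb Gb.
rewrite !mul0r adde0; apply => z nN; rewrite mul0r adde0; exact: FG.
Qed.

Lemma int_step n i a t l (F G : R * discr E -> \bar R) : A i a -> 0 <= t -> 0 <= l ->
  (forall z, ~ NN z -> ((U l)%:E <= F z <= (ub t l)%:E)%E) ->
  (forall z, ~ NN z -> ((U l)%:E <= G z <= (ub t l)%:E)%E) ->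
  (forall z, ~ NN z -> (F z <= G z + (en n (t + z.1) (l + ci i a t z.1))%:E)%E) ->
  (\int[Q i a]_z F z <= \int[Q i a]_z G z + (en n.+1 t l)%:E)%E.
Proof.
move=> Aa t0 l0 Fb Gb FG.
have ed0 : 0 <= ed by exact/ltW/expR_gt0.
have ed1 : 0 <= 1 - ed by have := ed_le1; lra.
have := @J_step _ _ _ (Q i a) (hQ1 i a Aa) NN SS F G (K n t l) ed (1 - ed) (1 - eps) (U l) (ub t l) (U l) (ub t l) (mX 0) (hQ0 i a Aa) (mX delta) (hA1 i a Aa) (K_ge0 n t l l0) ed0 ed1 _ Fb Gb.
have -> : K n t l * (ed + (1 - ed) * (1 - eps)) = en n.+1 t l.
  by rewrite /K /en exprSr /g /ed; ring.
apply => z nN; apply: le_trans (FG z nN) _; apply: leeD2l; rewrite lee_fin.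
have s0 := posNN z nN.
apply: en_step => //; have := cost_ge0 i a t z.1 Aa (ltW s0); lra.
Qed.

Let Uv : R -> E -> R -> \bar R := fun t i l => (U l)%:E.
Let vb : R -> E -> R -> \bar R := fun t i l => (ub t l)%:E.

Lemma ub_ge t l : 0 <= l -> U l <= ub t l.
Proof.
move=> l0; apply: (@U_mono R U hUi) => //; rewrite lerDr.
by apply: mulr_ge0; [apply: mulr_ge0; [exact/ltW/expR_gt0|exact: ltW]|rewrite invr_ge0 ltW].
Qed.

Lemma top_main n : forall t i l, 0 <= t -> 0 <= l ->
  [/\ ((U l)%:E <= iter n (Top A Q C alpha) Uv t i l)%E,
      (iter n (Top A Q C alpha) Uv t i l <= iter n (Top A Q C alpha) vb t i l)%E,
      (iter n (Top A Q C alpha) vb t i l <= (ub t l)%:E)%E &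
      (iter n (Top A Q C alpha) vb t i l <= iter n (Top A Q C alpha) Uv t i l + (en n t l)%:E)%E].
Proof.
elim: n => [|n IH] t i l t0 l0.
  rewrite /=; split.
  - exact: lexx.
  - by rewrite /Uv /vb lee_fin ub_ge.
  - exact: lexx.
  - rewrite /Uv /vb /en /ub expr0 mulr1 -EFinD lee_fin.
    have d0 : 0 <= expR (- alpha * t) * cbar / alpha.
      by apply: mulr_ge0; [apply: mulr_ge0; [exact/ltW/expR_gt0|exact: ltW]|rewrite invr_ge0 ltW].
    have := @Upm_bound R U hUconc hU0 l _ l0 d0.
    have -> : expR (- alpha * t) * cbar / alpha + l = l + expR (- alpha * t) * cbar / alpha by ring.
    have -> : Upm R U l * expR (- alpha * t) * (cbar / alpha) =
       Upm R U l * (expR (- alpha * t) * cbar / alpha) by ring.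
    by [].
rewrite !iterS.
set TU := iter n (Top A Q C alpha) Uv.
set TV := iter n (Top A Q C alpha) vb.
have Hz a z : A i a -> ~ NN z ->
    [/\ ((U l)%:E <= TU (t + z.1)%R z.2 (l + cost_incr C alpha i a t z.1)%R <= (ub t l)%:E)%E,
        ((U l)%:E <= TV (t + z.1)%R z.2 (l + cost_incr C alpha i a t z.1)%R <= (ub t l)%:E)%E,
        (TU (t + z.1)%R z.2 (l + cost_incr C alpha i a t z.1)%R <=
         TV (t + z.1)%R z.2 (l + cost_incr C alpha i a t z.1)%R)%E &
        (TV (t + z.1)%R z.2 (l + cost_incr C alpha i a t z.1)%R <=
         TU (t + z.1)%R z.2 (l + cost_incr C alpha i a t z.1)%R +
           (en n (t + z.1)%R (l + ci i a t z.1)%R)%:E)%E].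
  move=> Aa nN; have s0 := posNN z nN.
  have c0 := cost_ge0 i a t z.1 Aa (ltW s0).
  have [h1 h2 h3 h4] := IH (t + z.1)%R z.2 (l + cost_incr C alpha i a t z.1)%R
     ltac:(lra) ltac:(rewrite /ci in c0; lra).
  split => //.
  - apply: (@bnd_trans i a t l z _ Aa t0 l0 nN); rewrite h1 /=; exact: le_trans h2 h3.
  - apply: (@bnd_trans i a t l z _ Aa t0 l0 nN); rewrite h3 andbT; exact: le_trans h1 h2.
have HzU a z : A i a -> ~ NN z ->
    ((U l)%:E <= TU (t + z.1)%R z.2 (l + cost_incr C alpha i a t z.1)%R <= (ub t l)%:E)%E.
  by move=> Aa nN; case: (Hz a z Aa nN).
have HzV a z : A i a -> ~ NN z ->
    ((U l)%:E <= TV (t + z.1)%R z.2 (l + cost_incr C alpha i a t z.1)%R <= (ub t l)%:E)%E.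
  by move=> Aa nN; case: (Hz a z Aa nN).
have HI a : A i a ->
  [/\ ((U l)%:E <= \int[Q i a]_z TU (t + z.1)%R z.2 (l + cost_incr C alpha i a t z.1)%R)%E,
      (\int[Q i a]_z TU (t + z.1)%R z.2 (l + cost_incr C alpha i a t z.1)%R <=
       \int[Q i a]_z TV (t + z.1)%R z.2 (l + cost_incr C alpha i a t z.1)%R)%E,
      (\int[Q i a]_z TV (t + z.1)%R z.2 (l + cost_incr C alpha i a t z.1)%R <= (ub t l)%:E)%E &
      (\int[Q i a]_z TV (t + z.1)%R z.2 (l + cost_incr C alpha i a t z.1)%R <=
       \int[Q i a]_z TU (t + z.1)%R z.2 (l + cost_incr C alpha i a t z.1)%R + (en n.+1 t l)%:E)%E].
  move=> Aa; split.
  - by case/andP: (@int_bnd i a t l _ Aa (fun z nN => HzU a z Aa nN)).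
  - apply: (@int_mono i a t l _ _ Aa (fun z nN => HzU a z Aa nN) (fun z nN => HzV a z Aa nN)).
    by move=> z nN; case: (Hz a z Aa nN).
  - by case/andP: (@int_bnd i a t l _ Aa (fun z nN => HzV a z Aa nN)).
  - apply: (@int_step n i a t l _ _ Aa t0 l0 (fun z nN => HzV a z Aa nN) (fun z nN => HzU a z Aa nN)).
    by move=> z nN; case: (Hz a z Aa nN).
have [a0 Aa0] := hA0 i.
rewrite /Top; split.
- by apply: le_ereal_inf_tmp => _ [a Aa <-]; case: (HI a Aa).
- apply: le_ereal_inf_tmp => _ [a Aa <-]; case: (HI a Aa) => _ h _ _; apply: le_trans h.
  by apply: ereal_inf_lbound; exists a.
- case: (HI a0 Aa0) => _ _ h _; apply: le_trans h.
  by apply: ereal_inf_lbound; exists a0.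
- rewrite -leeBlDr //; apply: le_ereal_inf_tmp => _ [a Aa <-]; rewrite leeBlDr //.
  case: (HI a Aa) => _ _ _ h; apply: le_trans h.
  by apply: ereal_inf_lbound; exists a.
Qed.

Lemma ub_en0 t l : 0 <= t -> 0 <= l -> ((ub t l)%:E <= (U l)%:E + (en 0 t l)%:E)%E.
Proof.
move=> t0 l0; have [_ _ _ h] := top_main 0 t point l t0 l0; exact: h.
Qed.

Section Pol.
Variable f : policy R E Act.
Hypothesis hf : admissible_policy A f.
Local Notation ev := (exp_val Q C alpha U f).

Lemma ev_bnd m : forall k (h : hist R E Act k), 0 <= h.2.1.1 -> 0 <= h.2.2 ->
  ((U h.2.2)%:E <= ev m h <= (ub h.2.1.1 h.2.2)%:E)%E.
Proof.
elim: m => [|m IH] k h t0 l0.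
  by rewrite /= lexx /= lee_fin ub_ge.
have Aa : A h.2.1.2 (f k h) by exact: (hf k).2.
rewrite /=; apply: (@int_bnd _ _ _ _ _ Aa) => z nN.
apply: (@bnd_trans _ _ _ _ z _ Aa t0 l0 nN).
have s0 := posNN z nN.
have c0 := cost_ge0 h.2.1.2 (f k h) h.2.1.1 z.1 Aa (ltW s0).
apply: IH => /=; rewrite /ci in c0; lra.
Qed.

Lemma ev_step N : forall m k (h : hist R E Act k), 0 <= h.2.1.1 -> 0 <= h.2.2 ->
  (ev N h <= ev (N + m) h <= ev N h + (en N h.2.1.1 h.2.2)%:E)%E.
Proof.
elim: N => [|N IH] m k h t0 l0.
  rewrite add0n; have /andP[h1 h2] := ev_bnd m k h t0 l0.
  by rewrite /= h1 /=; apply: le_trans h2 (ub_en0 _ _ t0 l0).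
have Aa : A h.2.1.2 (f k h) by exact: (hf k).2.
have Hb M z : ~ NN z ->
  ((U h.2.2)%:E <= ev M (hist_ext h (f k h) ((h.2.1.1 + z.1, z.2),
       h.2.2 + cost_incr C alpha h.2.1.2 (f k h) h.2.1.1 z.1)%R) <= (ub h.2.1.1 h.2.2)%:E)%E.
  move=> nN; apply: (@bnd_trans _ _ _ _ z _ Aa t0 l0 nN).
  have s0 := posNN z nN.
  have c0 := cost_ge0 h.2.1.2 (f k h) h.2.1.1 z.1 Aa (ltW s0).
  apply: ev_bnd => /=; rewrite /ci in c0; lra.
have HI z : ~ NN z ->
  (ev N (hist_ext h (f k h) ((h.2.1.1 + z.1, z.2),
       h.2.2 + cost_incr C alpha h.2.1.2 (f k h) h.2.1.1 z.1)%R) <=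
   ev (N + m) (hist_ext h (f k h) ((h.2.1.1 + z.1, z.2),
       h.2.2 + cost_incr C alpha h.2.1.2 (f k h) h.2.1.1 z.1)%R) <=
   ev N (hist_ext h (f k h) ((h.2.1.1 + z.1, z.2),
       h.2.2 + cost_incr C alpha h.2.1.2 (f k h) h.2.1.1 z.1)%R) +
   (en N (h.2.1.1 + z.1) (h.2.2 + ci h.2.1.2 (f k h) h.2.1.1 z.1))%:E)%E.
  move=> nN; have s0 := posNN z nN.
  have c0 := cost_ge0 h.2.1.2 (f k h) h.2.1.1 z.1 Aa (ltW s0).
  apply: IH => /=; rewrite /ci in c0; lra.
rewrite addSn /=; apply/andP; split.
  apply: (@int_mono _ _ _ _ _ _ Aa (Hb N) (Hb (N + m)%N)).
  by move=> z nN; case/andP: (HI z nN).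
apply: (@int_step N _ _ _ _ _ _ Aa t0 l0 (Hb (N + m)%N) (Hb N)).
by move=> z nN; case/andP: (HI z nN).
Qed.

Lemma euc_main n t i l : 0 <= t -> 0 <= l ->
  (EUCn Q C alpha U f n t i l <= EUCinf Q C alpha U f t i l <=
   EUCn Q C alpha U f n t i l + (en n t l)%:E)%E.
Proof.
move=> t0 l0.
pose u m := EUCn Q C alpha U f m t i l.
have st m p : (u m <= u (m + p)%N <= u m + (en m t l)%:E)%E.
  rewrite /u /EUCn; exact: (@ev_step m p 0 (@init_hist R E Act t i l) t0 l0).
have nd : nondecreasing_seq u.
  by apply/nondecreasing_seqP => m; rewrite -addn1; case/andP: (st m 1%N).
have -> : EUCinf Q C alpha U f t i l = ereal_sup (range u).
  by apply/cvg_lim => //; exact: ereal_nondecreasing_cvgn.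
apply/andP; split; first by apply: ereal_sup_ubound; exists n.
apply: ge_ereal_sup => _ [m _ <-].
have [nm|mn] := leqP n m.
  by rewrite -(subnKC nm); case/andP: (st n (m - n)%N).
apply: le_trans (nd _ _ (ltnW mn)) _.
by rewrite leeDl // lee_fin; exact: K_ge0.
Qed.
End Pol.

Lemma V_main n t i l : 0 <= t -> 0 <= l ->
  (V_n A Q C alpha U n t i l <= V_inf A Q C alpha U t i l)%E /\
  (V_inf A Q C alpha U t i l <= V_n A Q C alpha U n t i l + (en n t l)%:E)%E.
Proof.
move=> t0 l0; split.
  apply: le_ereal_inf_tmp => _ [f hf <-].
  case/andP: (@euc_main f hf n t i l t0 l0) => h _; apply: le_trans h.
  by apply: ereal_inf_lbound; exists f.
rewrite -leeBlDr //; apply: le_ereal_inf_tmp => _ [f hf <-]; rewrite leeBlDr //.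
case/andP: (@euc_main f hf n t i l t0 l0) => _ h; apply: le_trans h.
by apply: ereal_inf_lbound; exists f.
Qed.
End Model.

Theorem mainTheorem5
  (R : realType) (E : pointedType) (Act : ptopologicalType)
  (A : E -> set Act)
  (Q : E -> Act -> {measure set (R * discr E)%type -> \bar R})
  (C : E -> Act -> R) (cbar alpha : R) (U : R -> R) (delta eps : R)
  (* countable state space *)
  (hE : countable [set: E])
  (* admissible action sets: nonempty, measurable *)
  (hA0 : forall i, A i !=set0)
  (hAm : forall i, measurable (A i : set (borelT Act)))
  (* semi-Markov kernel: probability on [0,oo) x E, no mass at sojourn time 0,
     measurable in the action *)
  (hQ1 : forall i a, A i a -> Q i a setT = 1%E)
  (hQ0 : forall i a, A i a -> Q i a ([set s : R | s <= 0] `*` setT) = 0%E)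
  (hQm : forall i (B : set (R * discr E)%type), measurable B ->
           measurable_fun (A i : set (borelT Act)) (fun a : borelT Act => Q i a B))
  (* bounded measurable cost, discount, utility *)
  (hcbar : 0 < cbar)
  (hC : forall i a, A i a -> 0 <= C i a <= cbar)
  (hCm : forall i, measurable_fun (A i : set (borelT Act)) (fun a : borelT Act => C i a))
  (halpha : 0 < alpha)
  (hUc : {within `[0, +oo[, continuous U})
  (hUi : {in `[0, +oo[ &, {mono U : x y / x < y}})
  (* Assumption 1 *)
  (hdelta : 0 < delta) (heps : 0 < eps)
  (hA1 : forall i a, A i a ->
           (Q i a ([set s : R | (s <= delta)%R] `*` setT) <= (1 - eps)%:E)%E)
  (* Assumption 2 *)
  (hAc : forall i, compact (A i))
  (hCc : forall i, {within A i, continuous (C i)})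
  (hA2 : forall v : R -> E -> R -> R,
      measurable_fun setT (fun x : St R E => v x.1.1 x.1.2 x.2) ->
      (forall t i l, 0 <= t -> 0 <= l ->
         U l <= v t i l <= U (expR (- alpha * t) * cbar / alpha + l)) ->
      forall t i l, 0 <= t -> 0 <= l ->
        {within A i, continuous (fun a : Act =>
           (\int[Q i a]_z (v (t + z.1) z.2 (l + cost_incr C alpha i a t z.1))%:E)%E)})
  (* U concave, U'(0) exists *)
  (hUconc : concave_on_nonneg U)
  (hU0 : cvg ((fun h : R => (U h - U 0) / h) @ 0^'+)) :
  let eps_n := fun (n : nat) (t l : R) =>
    Uprime_minus U l * expR (- alpha * t) * (cbar / alpha)
      * (1 - eps + eps * expR (- alpha * delta)) ^+ n in
  let Uv := fun (t : R) (i : E) (l : R) => (U l)%:E in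
  let vbar := fun (t : R) (i : E) (l : R) =>
    (U (expR (- alpha * t) * cbar / alpha + l))%:E in
  forall (n : nat) (t : R) (i : E) (l : R), 0 <= t -> 0 <= l ->
    ((V_n A Q C alpha U n t i l <= V_inf A Q C alpha U t i l)%E /\
     (V_inf A Q C alpha U t i l <= V_n A Q C alpha U n t i l + (eps_n n t l)%:E)%E) /\
    ((0 <= iter n (Top A Q C alpha) vbar t i l - iter n (Top A Q C alpha) Uv t i l)%E /\
     (iter n (Top A Q C alpha) vbar t i l - iter n (Top A Q C alpha) Uv t i l
        <= (eps_n n t l)%:E)%E).
Proof.
move=> eps_n Uv vbar n t i l t0 l0.
have HV := @V_main R E Act A Q C cbar alpha U delta eps hA0 hQ1 hQ0 hcbar hC halpha hUi
  hdelta heps hA1 hUconc hU0 n t i l t0 l0.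
have [h1 h2 h3 h4] := @top_main R E Act A Q C cbar alpha U delta eps hA0 hQ1 hQ0 hcbar hC
  halpha hUi hdelta heps hA1 hUconc hU0 n t i l t0 l0.
split; first exact: HV.
have fU : iter n (Top A Q C alpha) Uv t i l \is a fin_num.
  rewrite fin_numElt; apply/andP; split.
    exact: lt_le_trans (ltNyr _) h1.
  exact: le_lt_trans (le_trans h2 h3) (ltry _).
split.
  by rewrite sube_ge0 ?fU //; exact: h2.
by rewrite leeBlDr // addeC; exact: h4.
Qed.
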